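(* Let $m\ge1$ be an integer and $\alpha>0$. (i) Let $a,\lambda\in\mathbb{C}$ with $|\lambda|<\alpha$, and define $K_\lambda f(z)=am\,e^{\lambda z^m}\int_0^ze^{-\lambda w^m}w^{m-1}f(w)\,dw$ for entire $f$. Then $K_\lambda$ is a bounded operator on $\mathcal{F}^\infty_{(\alpha,m)}$ with $\|K_\lambda\|\le\frac{|a|}{\alpha-|\lambda|}$. (ii) For $a_m\in\mathbb{C}$ and $g_m(z)=a_mz^m$, the operator $V_{g_m}f(z)=\int_0^zg_m'(w)f(w)\,dw$ is bounded on $\mathcal{F}^\infty_{(\alpha,m)}$ with $\|V_{g_m}\|\le\frac{|a_m|}{\alpha}$.
   Context: For $\alpha>0$, $m>0$, $\mathcal{F}^\infty_{(\alpha,m)}$ denotes the Banach space of entire functions $f$ with $\|f\|_{(\infty,\alpha,m)}=\sup_{r>0}e^{-\alpha r^m}\max_{|z|=r}|f(z)|<\infty$. *)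

(* Defs.v *)
From Stdlib Require Import Reals ClassicalEpsilon.
From Coquelicot Require Import Coquelicot.
Open Scope R_scope.

Definition Cexp (z : C) : C := (exp (Re z) * cos (Im z), exp (Re z) * sin (Im z)).

Definition entire (f : C -> C) : Prop :=
  forall z : C, @ex_derive C_AbsRing C_NormedModule f z.

(* contour integral of h along the segment [0, z]:
   int_0^z h(w) dw = z * int_0^1 h(t z) dt  (real and imaginary parts) *)
Definition seg_int (h : C -> C) (z : C) : C :=
  Cmult z (RInt (fun t => Re (h (Cmult (RtoC t) z))) 0 1,
           RInt (fun t => Im (h (Cmult (RtoC t) z))) 0 1).

Definition fock_weight (alpha : R) (m : nat) (f : C -> C) (z : C) : R :=
  exp (- alpha * (Cmod z) ^ m) * Cmod (f z).

Definition in_fock (alpha : R) (m : nat) (f : C -> C) : Prop :=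
  entire f /\ exists M : R, forall z : C, 0 < Cmod z -> fock_weight alpha m f z <= M.

(* ||f||_(infty,alpha,m) = sup_{r>0} e^{-alpha r^m} max_{|z|=r}|f z|
   = sup over z <> 0 of fock_weight (the max over each circle is attained). *)
Definition fock_norm (alpha : R) (m : nat) (f : C -> C) : R :=
  real (Lub_Rbar (fun x => exists z : C, 0 < Cmod z /\ x = fock_weight alpha m f z)).

Definition K_op (a lambda : C) (m : nat) (f : C -> C) (z : C) : C :=
  Cmult (Cmult a (RtoC (INR m)))
    (Cmult (Cexp (Cmult lambda (Cpow z m)))
       (seg_int (fun w => Cmult (Cexp (Copp (Cmult lambda (Cpow w m))))
                               (Cmult (Cpow w (m - 1)) (f w))) z)).

(* complex derivative g'(w) (the unique l with is_derive g w l, when g is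
   complex differentiable at w; an arbitrary value otherwise) *)
Definition Cderiv (g : C -> C) (w : C) : C :=
  epsilon (inhabits (RtoC 0)) (fun l : C => @is_derive C_AbsRing C_NormedModule g w l).

Definition V_op (g : C -> C) (f : C -> C) (z : C) : C :=
  seg_int (fun w => Cmult (Cderiv g w) (f w)) z.

Definition fock_bounded_by (alpha : R) (m : nat) (T : (C -> C) -> (C -> C)) (c : R) : Prop :=
  forall f : C -> C, in_fock alpha m f ->
    in_fock alpha m (T f) /\ fock_norm alpha m (T f) <= c * fock_norm alpha m f.

(* Main.v *)
Require Import Defs.
From Stdlib Require Import Reals Lra Lia Psatz FunctionalExtensionality ClassicalEpsilon.
From Coquelicot Require Import Coquelicot.
Open Scope R_scope.


Lemma Cexp_add (a b : C) : Cexp (Cplus a b) = Cmult (Cexp a) (Cexp b).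
Proof.
  destruct a as [a1 a2], b as [b1 b2]; unfold Cexp; simpl.
  rewrite exp_plus, cos_plus, sin_plus.
  apply injective_projections; simpl; ring.
Qed.

Lemma Cexp_0 : Cexp (RtoC 0) = RtoC 1.
Proof.
  unfold Cexp; simpl. rewrite exp_0, cos_0, sin_0.
  apply injective_projections; simpl; ring.
Qed.

Lemma Cmod_Cexp (u : C) : Cmod (Cexp u) = exp (Re u).
Proof.
  destruct u as [x y]; unfold Cexp, Cmod; simpl.
  replace (exp x * cos y * (exp x * cos y * 1) + exp x * sin y * (exp x * sin y * 1))
    with (exp x * exp x * (Rsqr (sin y) + Rsqr (cos y))) by (unfold Rsqr; ring).
  rewrite sin2_cos2. rewrite Rmult_1_r. apply sqrt_square.
  apply Rlt_le, exp_pos.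
Qed.

Lemma im_le_Cmod (c : C) : Rabs (Im c) <= Cmod c.
Proof.
  pose proof (Rmax_Cmod c). pose proof (Rmax_r (Rabs (fst c)) (Rabs (snd c))).
  unfold Im. lra.
Qed.

Lemma Cmod_le_sum (c : C) : Cmod c <= Rabs (Re c) + Rabs (Im c).
Proof.
  destruct c as [x y]. unfold Cmod; simpl.
  apply Rsqr_incr_0_var.
  - rewrite Rsqr_sqrt by nra. unfold Rsqr.
    pose proof (Rabs_pos x); pose proof (Rabs_pos y).
    replace (x * (x*1) + y*(y*1)) with (Rabs x * Rabs x + Rabs y * Rabs y).
    + nra.
    + rewrite <- !Rabs_mult. rewrite !Rabs_right by nra. ring.
  - pose proof (Rabs_pos x); pose proof (Rabs_pos y); lra.
Qed.

Lemma exp_sub1_bound (x : R) : Rabs x <= 1 -> Rabs (exp x - 1) <= 3 * Rabs x.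
Proof.
  intros Hx.
  destruct (MVT_abs exp exp 0 x) as [c [Hc1 Hc2]].
  { intros; apply derivable_pt_lim_exp. }
  rewrite exp_0, Rminus_0_r in Hc1. rewrite Hc1.
  apply Rmult_le_compat_r; [apply Rabs_pos|].
  rewrite Rabs_right by (apply Rle_ge, Rlt_le, exp_pos).
  apply Rle_trans with (exp 1); [|apply exp_le_3].
  assert (c <= 1).
  { destruct (Rle_dec 0 x).
    - rewrite Rmin_left, Rmax_right in Hc2 by lra. rewrite Rabs_right in Hx by lra. lra.
    - rewrite Rmin_right, Rmax_left in Hc2 by lra. lra. }
  destruct (Req_dec c 1); [subst; lra|]. left; apply exp_increasing; lra.
Qed.

Lemma exp_taylor_bound (x : R) : Rabs x <= 1 -> Rabs (exp x - 1 - x) <= 3 * x ^ 2.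
Proof.
  intros Hx.
  destruct (MVT_abs (fun t => exp t - t) (fun t => exp t - 1) 0 x) as [c [Hc1 Hc2]].
  { intros. apply (derivable_pt_lim_minus exp id). apply derivable_pt_lim_exp. apply derivable_pt_lim_id. }
  rewrite exp_0 in Hc1. replace (exp x - 1 - x) with (exp x - x - (1 - 0)) by ring. rewrite Hc1.
  rewrite Rminus_0_r.
  assert (Rabs c <= Rabs x).
  { destruct (Rle_dec 0 x).
    - rewrite Rmin_left, Rmax_right in Hc2 by lra. rewrite !Rabs_right by lra. lra.
    - rewrite Rmin_right, Rmax_left in Hc2 by lra. rewrite !Rabs_left1 by lra. lra. }
  pose proof (exp_sub1_bound c ltac:(lra)).
  pose proof (Rabs_pos x).
  replace (x^2) with (Rabs x * Rabs x) by (rewrite <- Rabs_mult; rewrite Rabs_right by nra; ring).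
  nra.
Qed.

Lemma sin_abs_le (y : R) : Rabs (sin y) <= Rabs y.
Proof.
  destruct (MVT_abs sin cos 0 y) as [c [Hc1 Hc2]].
  { intros; apply derivable_pt_lim_sin. }
  rewrite sin_0, !Rminus_0_r in Hc1. rewrite Hc1.
  pose proof (COS_bound c). pose proof (Rabs_pos y).
  assert (Rabs (cos c) <= 1) by (apply Rabs_le; lra). nra.
Qed.

Lemma cos_sub1_bound (y : R) : Rabs (cos y - 1) <= y ^ 2.
Proof.
  destruct (MVT_abs cos (fun t => - sin t) 0 y) as [c [Hc1 Hc2]].
  { intros; apply derivable_pt_lim_cos. }
  rewrite cos_0, Rminus_0_r in Hc1. rewrite Hc1. rewrite Rabs_Ropp.
  assert (Rabs c <= Rabs y).
  { destruct (Rle_dec 0 y).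
    - rewrite Rmin_left, Rmax_right in Hc2 by lra. rewrite !Rabs_right by lra. lra.
    - rewrite Rmin_right, Rmax_left in Hc2 by lra. rewrite !Rabs_left1 by lra. lra. }
  pose proof (sin_abs_le c). pose proof (Rabs_pos y). pose proof (Rabs_pos (sin c)).
  replace (y^2) with (Rabs y * Rabs y) by (rewrite <- Rabs_mult; rewrite Rabs_right by nra; ring).
  nra.
Qed.

Lemma sin_taylor_bound (y : R) : Rabs y <= 1 -> Rabs (sin y - y) <= y ^ 2.
Proof.
  intros Hy.
  destruct (MVT_abs (fun t => sin t - t) (fun t => cos t - 1) 0 y) as [c [Hc1 Hc2]].
  { intros. apply (derivable_pt_lim_minus sin id). apply derivable_pt_lim_sin. apply derivable_pt_lim_id. }
  rewrite sin_0 in Hc1. replace (sin y - y) with (sin y - y - (0 - 0)) by ring. rewrite Hc1.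
  rewrite Rminus_0_r.
  assert (Rabs c <= Rabs y).
  { destruct (Rle_dec 0 y).
    - rewrite Rmin_left, Rmax_right in Hc2 by lra. rewrite !Rabs_right by lra. lra.
    - rewrite Rmin_right, Rmax_left in Hc2 by lra. rewrite !Rabs_left1 by lra. lra. }
  pose proof (cos_sub1_bound c). pose proof (Rabs_pos y).
  assert (c^2 <= Rabs y * Rabs y).
  { replace (c^2) with (Rabs c * Rabs c) by (rewrite <- Rabs_mult; rewrite Rabs_right by nra; ring).
    pose proof (Rabs_pos c). nra. }
  replace (y^2) with (Rabs y * Rabs y) by (rewrite <- Rabs_mult; rewrite Rabs_right by nra; ring).
  pose proof (Rabs_pos (cos c - 1)). nra.
Qed.


Lemma Cball_Cmod (z y : C) (e : R) : ball (M:=C_NormedModule) z e y -> Cmod (Cminus y z) < 2 * e.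
Proof.
  intros [H1 H2].
  pose proof (Cmod_le_sum (Cminus y z)). destruct y as [y1 y2], z as [z1 z2].
  change (Rabs (y1 - z1) < e) in H1. change (Rabs (y2 - z2) < e) in H2.
  simpl in H. unfold Rminus in *. lra.
Qed.

Lemma is_derive_C_of (f : C -> C) z l :
  (forall eps : posreal, exists del : posreal, forall y, Cmod (Cminus y z) < del ->
     Cmod (Cminus (Cminus (f y) (f z)) (Cmult (Cminus y z) l)) <= eps * Cmod (Cminus y z)) ->
  @is_derive C_AbsRing C_NormedModule f z l.
Proof.
  intros H. split.
  - apply is_linear_scal_l.
  - intros x Hx. apply (is_filter_lim_locally_unique (K:=C_AbsRing) (V:=AbsRing_NormedModule C_AbsRing)) in Hx. subst x.
    intros eps. destruct (H eps) as [d Hd].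
    exists d. intros y Hy. apply Hd. exact Hy.
Qed.

Lemma is_derive_C_bound (f : C -> C) z l :
  @is_derive C_AbsRing C_NormedModule f z l ->
  forall eps : posreal, exists del : posreal, forall y, Cmod (Cminus y z) < del ->
     Cmod (Cminus (Cminus (f y) (f z)) (Cmult (Cminus y z) l)) <= eps * Cmod (Cminus y z).
Proof.
  intros [_ H] eps.
  specialize (H z (fun P HP => HP) eps).
  destruct H as [d Hd]. exists d. intros y Hy. apply (Hd y). exact Hy.
Qed.

Lemma is_derive_C_cont (f : C -> C) z l :
  @is_derive C_AbsRing C_NormedModule f z l ->
  forall eps : R, 0 < eps -> exists del : R, 0 < del /\ forall y, Cmod (Cminus y z) < del ->
     Cmod (Cminus (f y) (f z)) < eps.
Proof.
  intros H eps Heps.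
  destruct (is_derive_C_bound f z l H (mkposreal 1 Rlt_0_1)) as [d Hd].
  assert (Hp : 0 < eps / (Cmod l + 1)).
  { apply Rdiv_lt_0_compat; auto. pose proof (Cmod_ge_0 l); lra. }
  exists (Rmin d (eps / (Cmod l + 1))). split.
  { apply Rmin_pos; auto. destruct d; auto. }
  intros y Hy. specialize (Hd y (Rlt_le_trans _ _ _ Hy (Rmin_l _ _))). simpl in Hd.
  pose proof (Rlt_le_trans _ _ _ Hy (Rmin_r _ _)) as Hy2.
  replace (Cminus (f y) (f z)) with
    (Cplus (Cminus (Cminus (f y) (f z)) (Cmult (Cminus y z) l)) (Cmult (Cminus y z) l)) by ring.
  eapply Rle_lt_trans. apply Cmod_triangle. rewrite Cmod_mult.
  pose proof (Cmod_ge_0 l). pose proof (Cmod_ge_0 (Cminus y z)).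
  assert (Cmod (Cminus y z) * (Cmod l + 1) < eps).
  { apply Rmult_lt_reg_r with (/ (Cmod l + 1)). apply Rinv_0_lt_compat; lra.
    rewrite Rmult_assoc, Rinv_r, Rmult_1_r by lra. exact Hy2. }
  nra.
Qed.

Lemma Cexp_taylor (u : C) : Cmod u <= 1 ->
  Cmod (Cminus (Cminus (Cexp u) (RtoC 1)) u) <= 6 * (Cmod u) ^ 2.
Proof.
  intros Hu. rewrite Cmod2_alt.
  pose proof (re_le_Cmod u) as Hx. pose proof (im_le_Cmod u) as Hy.
  destruct u as [x y]. unfold Re, Im in *; simpl in *.
  eapply Rle_trans. apply Cmod_le_sum. unfold Cexp; simpl.
  assert (Hx1 : Rabs x <= 1) by lra. assert (Hy1 : Rabs y <= 1) by lra.
  assert (He : exp x <= 3).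
  { apply Rle_trans with (exp 1); [|apply exp_le_3].
    destruct (Req_dec x 1); [subst; lra|]. left; apply exp_increasing.
    apply Rabs_le_between in Hx1; lra. }
  pose proof (exp_pos x).
  pose proof (exp_taylor_bound x Hx1). pose proof (cos_sub1_bound y).
  pose proof (exp_sub1_bound x Hx1). pose proof (sin_taylor_bound y Hy1).
  pose proof (sin_abs_le y).
  assert (R1 : Rabs (exp x * cos y - 1 - x) <= 3 * x^2 + 3 * y^2).
  { replace (exp x * cos y - 1 - x) with ((exp x - 1 - x) + exp x * (cos y - 1)) by ring.
    eapply Rle_trans. apply Rabs_triang. rewrite Rabs_mult, (Rabs_right (exp x)) by lra.
    pose proof (Rabs_pos (cos y - 1)). nra. }
  assert (R2 : Rabs (exp x * sin y - 0 - y) <= 3 * Rabs x * Rabs y + y^2).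
  { replace (exp x * sin y - 0 - y) with ((exp x - 1) * sin y + (sin y - y)) by ring.
    eapply Rle_trans. apply Rabs_triang. rewrite Rabs_mult.
    pose proof (Rabs_pos (exp x - 1)). pose proof (Rabs_pos (sin y)). pose proof (Rabs_pos y). nra. }
  assert (Rabs x * Rabs y <= (x^2 + y^2)/2).
  { rewrite <- (pow2_abs x), <- (pow2_abs y).
    pose proof (pow2_ge_0 (Rabs x - Rabs y)). nra. }
  unfold Rminus in R1, R2 |- *. simpl in R1, R2 |- *. nra.
Qed.

Lemma is_derive_A_of (f : C -> C) z l :
  (forall eps : posreal, exists del : posreal, forall y, Cmod (Cminus y z) < del ->
     Cmod (Cminus (Cminus (f y) (f z)) (Cmult (Cminus y z) l)) <= eps * Cmod (Cminus y z)) ->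
  @is_derive C_AbsRing (AbsRing_NormedModule C_AbsRing) f z l.
Proof.
  intros H. split.
  - apply is_linear_scal_l.
  - intros x Hx. apply (is_filter_lim_locally_unique (K:=C_AbsRing) (V:=AbsRing_NormedModule C_AbsRing)) in Hx. subst x.
    intros eps. destruct (H eps) as [d Hd].
    exists d. intros y Hy. apply Hd. exact Hy.
Qed.

Lemma is_derive_A_bound (f : C -> C) z l :
  @is_derive C_AbsRing (AbsRing_NormedModule C_AbsRing) f z l ->
  forall eps : posreal, exists del : posreal, forall y, Cmod (Cminus y z) < del ->
     Cmod (Cminus (Cminus (f y) (f z)) (Cmult (Cminus y z) l)) <= eps * Cmod (Cminus y z).
Proof.
  intros [_ H] eps.
  specialize (H z (fun P HP => HP) eps).
  destruct H as [d Hd]. exists d. intros y Hy. apply (Hd y). exact Hy.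
Qed.

Lemma Cd_to_A f z l : @is_derive C_AbsRing C_NormedModule f z l -> @is_derive C_AbsRing (AbsRing_NormedModule C_AbsRing) f z l.
Proof. intros H. apply is_derive_A_of, is_derive_C_bound, H. Qed.
Lemma A_to_Cd f z l : @is_derive C_AbsRing (AbsRing_NormedModule C_AbsRing) f z l -> @is_derive C_AbsRing C_NormedModule f z l.
Proof. intros H. apply is_derive_C_of, is_derive_A_bound, H. Qed.


Notation Cd f z l := (@is_derive C_AbsRing C_NormedModule f z l).

Lemma Cd_Cexp z : Cd Cexp z (Cexp z).
Proof.
  apply is_derive_C_of. intros eps.
  set (K := 6 * Cmod (Cexp z) + 1).
  assert (HK : 0 < K) by (unfold K; pose proof (Cmod_ge_0 (Cexp z)); lra).
  assert (Hd : 0 < Rmin 1 (eps / K)).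
  { apply Rmin_pos. lra. apply Rdiv_lt_0_compat; [destruct eps; auto| auto]. }
  exists (mkposreal _ Hd). intros y Hy. simpl in Hy.
  set (u := Cminus y z).
  assert (Hy' : y = Cplus z u) by (unfold u; ring).
  replace (Cminus (Cminus (Cexp y) (Cexp z)) (Cmult u (Cexp z)))
    with (Cmult (Cexp z) (Cminus (Cminus (Cexp u) (RtoC 1)) u)).
  2:{ rewrite Hy', Cexp_add. ring. }
  rewrite Cmod_mult. fold u in Hy |- *.
  pose proof (Rlt_le_trans _ _ _ Hy (Rmin_l _ _)) as Hu1.
  pose proof (Rlt_le_trans _ _ _ Hy (Rmin_r _ _)) as Hu2.
  pose proof (Cexp_taylor u (Rlt_le _ _ Hu1)) as HT.
  pose proof (Cmod_ge_0 (Cexp z)). pose proof (Cmod_ge_0 u).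
  assert (Cmod u * K <= eps).
  { apply Rmult_le_reg_r with (/ K). apply Rinv_0_lt_compat; lra.
    rewrite Rmult_assoc, Rinv_r, Rmult_1_r by lra. left; exact Hu2. }
  unfold K in H1.
  apply Rle_trans with (Cmod (Cexp z) * (6 * Cmod u ^ 2)).
  { apply Rmult_le_compat_l; auto. }
  simpl. nra.
Qed.

Lemma Cd_id z : Cd (fun w => w) z (RtoC 1).
Proof.
  apply is_derive_C_of. intros eps. exists (mkposreal 1 Rlt_0_1). intros y _.
  replace (Cminus (Cminus y z) (Cmult (Cminus y z) (RtoC 1))) with (RtoC 0) by ring.
  rewrite Cmod_0. pose proof (Cmod_ge_0 (Cminus y z)). destruct eps; simpl; nra.
Qed.

Lemma Cd_const (c : C) z : Cd (fun _ => c) z (RtoC 0).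
Proof. apply (is_derive_const (K:=C_AbsRing) (V:=C_NormedModule)). Qed.

Lemma Cd_mult f g z df dg : Cd f z df -> Cd g z dg ->
  Cd (fun w => Cmult (f w) (g w)) z (Cplus (Cmult df (g z)) (Cmult (f z) dg)).
Proof.
  intros Hf Hg. apply A_to_Cd. apply (is_derive_mult (K:=C_AbsRing) f g z df dg (Cd_to_A _ _ _ Hf) (Cd_to_A _ _ _ Hg)).
  intros; apply Cmult_comm.
Qed.

Lemma Cd_plus f g z df dg : Cd f z df -> Cd g z dg ->
  Cd (fun w => Cplus (f w) (g w)) z (Cplus df dg).
Proof.
  intros Hf Hg. apply (is_derive_plus (K:=C_AbsRing) (V:=C_NormedModule) f g z df dg Hf Hg).
Qed.

Lemma Cd_comp f g z df dg : Cd f (g z) df -> Cd g z dg ->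
  Cd (fun w => f (g w)) z (Cmult dg df).
Proof.
  intros Hf Hg. apply (is_derive_comp (K:=C_AbsRing) (V:=C_NormedModule) f g z df dg Hf (Cd_to_A _ _ _ Hg)).
Qed.

Lemma Cd_ext f g z l : (forall w, f w = g w) -> Cd f z l -> Cd g z l.
Proof. intros H. apply is_derive_ext. auto. Qed.

Lemma Cd_l_ext f z l l' : l = l' -> Cd f z l -> Cd f z l'.
Proof. intros ->; auto. Qed.

Lemma Cd_pow (n : nat) z : Cd (fun w => Cpow w n) z (Cmult (RtoC (INR n)) (Cpow z (n - 1))).
Proof.
  induction n as [|n IH].
  - apply Cd_l_ext with (RtoC 0). simpl; ring.
    apply Cd_ext with (fun _ => RtoC 1). intros; reflexivity. apply Cd_const.
  - eapply Cd_l_ext; [|apply (Cd_mult (fun w => w) (fun w => Cpow w n)); [apply Cd_id|apply IH]].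
    rewrite S_INR. destruct n as [|k].
    + simpl. apply injective_projections; simpl; ring.
    + replace (S (S k) - 1)%nat with (S k) by lia. replace (S k - 1)%nat with k by lia.
      simpl. rewrite RtoC_plus. ring.
Qed.

Lemma entire_ex (f : C -> C) : entire f <-> forall z, exists l, Cd f z l.
Proof. reflexivity. Qed.

Lemma entire_Cexp : entire Cexp.
Proof. intros z; exists (Cexp z); apply Cd_Cexp. Qed.
Lemma entire_const (c : C) : entire (fun _ => c).
Proof. intros z; eexists; apply Cd_const. Qed.
Lemma entire_id : entire (fun w => w).
Proof. intros z; eexists; apply Cd_id. Qed.
Lemma entire_pow n : entire (fun w => Cpow w n).
Proof. intros z; eexists; apply Cd_pow. Qed.
Lemma entire_mult f g : entire f -> entire g -> entire (fun w => Cmult (f w) (g w)).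
Proof. intros Hf Hg z. destruct (Hf z) as [a Ha], (Hg z) as [b Hb]. eexists; apply Cd_mult; eauto. Qed.
Lemma entire_plus f g : entire f -> entire g -> entire (fun w => Cplus (f w) (g w)).
Proof. intros Hf Hg z. destruct (Hf z) as [a Ha], (Hg z) as [b Hb]. eexists; apply Cd_plus; eauto. Qed.
Lemma entire_comp f g : entire f -> entire g -> entire (fun w => f (g w)).
Proof. intros Hf Hg z. destruct (Hg z) as [b Hb], (Hf (g z)) as [a Ha]. eexists; apply Cd_comp; eauto. Qed.


Definition Ccont (h : C -> C) := forall z eps, 0 < eps -> exists del, 0 < del /\
  forall y, Cmod (Cminus y z) < del -> Cmod (Cminus (h y) (h z)) < eps.

Lemma entire_Ccont h : entire h -> Ccont h.
Proof. intros H z eps Heps. destruct (H z) as [l Hl]. eapply is_derive_C_cont; eauto. Qed.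

Lemma normCR (x : C) : norm (K:=R_AbsRing) (V:=C_R_NormedModule) x = Cmod x.
Proof.
  unfold norm; simpl. unfold prod_norm, Cmod; simpl. f_equal.
  change (@norm R_AbsRing R_NormedModule (fst x)) with (Rabs (fst x)).
  change (@norm R_AbsRing R_NormedModule (snd x)) with (Rabs (snd x)).
  rewrite !Rmult_1_r, <- !Rabs_mult, !Rabs_right; try nra. 
Qed.

Definition Rcont_at (g : R -> C) (t : R) := forall eps, 0 < eps -> exists del, 0 < del /\
  forall t', Rabs (t' - t) < del -> Cmod (Cminus (g t') (g t)) < eps.

Lemma Rcont_continuous g t : Rcont_at g t -> continuous (T:=R_UniformSpace) (U:=C_R_NormedModule) g t.
Proof.
  intros H. apply filterlim_locally. intros eps.
  destruct (H eps (cond_pos eps)) as [d [Hd Hd']].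
  exists (mkposreal d Hd). intros t' Ht'. specialize (Hd' t' Ht').
  pose proof (re_le_Cmod (Cminus (g t') (g t))). pose proof (im_le_Cmod (Cminus (g t') (g t))).
  split; simpl.
  - change (Rabs (fst (g t') - fst (g t)) < eps). unfold Re in *; simpl in *. unfold Rminus. lra.
  - change (Rabs (snd (g t') - snd (g t)) < eps). unfold Im in *; simpl in *. unfold Rminus. lra.
Qed.

Lemma Cmod_diff_le (a b : C) : Rabs (Cmod a - Cmod b) <= Cmod (Cminus a b).
Proof.
  apply Rabs_le. split.
  - pose proof (Cmod_triangle (Cminus b a) a). replace (Cplus (Cminus b a) a) with b in H by ring.
    replace (Cminus b a) with (Copp (Cminus a b)) in H by ring. rewrite Cmod_opp in H. lra.
  - pose proof (Cmod_triangle (Cminus a b) b). replace (Cplus (Cminus a b) b) with a in H by ring. lra.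
Qed.

Lemma Rcont_Cmod g t : Rcont_at g t -> continuous (fun s => Cmod (g s)) t.
Proof.
  intros H. apply filterlim_locally. intros eps.
  destruct (H eps (cond_pos eps)) as [d [Hd Hd']].
  exists (mkposreal d Hd). intros t' Ht'. specialize (Hd' t' Ht').
  change (Rabs (Cmod (g t') - Cmod (g t)) < eps).
  eapply Rle_lt_trans. apply Cmod_diff_le. exact Hd'.
Qed.

Definition segf (h : C -> C) (p q : C) (t : R) : C := h (Cplus p (Cmult (RtoC t) (Cminus q p))).

Lemma segf_Rcont h p q t : Ccont h -> Rcont_at (segf h p q) t.
Proof.
  intros Hh eps Heps.
  destruct (Hh (Cplus p (Cmult (RtoC t) (Cminus q p))) eps Heps) as [d [Hd Hd']].
  pose proof (Cmod_ge_0 (Cminus q p)).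
  exists (d / (Cmod (Cminus q p) + 1)). split. apply Rdiv_lt_0_compat; lra.
  intros t' Ht'. unfold segf. apply Hd'.
  replace (Cminus (Cplus p (Cmult (RtoC t') (Cminus q p))) (Cplus p (Cmult (RtoC t) (Cminus q p))))
    with (Cmult (RtoC (t' - t)) (Cminus q p)).
  2:{ rewrite RtoC_minus. ring. }
  rewrite Cmod_mult, Cmod_R.
  apply Rle_lt_trans with (Rabs (t'-t) * (Cmod (Cminus q p) + 1)).
  { apply Rmult_le_compat_l. apply Rabs_pos. lra. }
  apply Rmult_lt_reg_r with (/ (Cmod (Cminus q p) + 1)). apply Rinv_0_lt_compat; lra.
  rewrite Rmult_assoc, Rinv_r, Rmult_1_r by lra. exact Ht'.
Qed.

Lemma ex_RInt_segf h p q a b : Ccont h -> ex_RInt (V:=C_R_CompleteNormedModule) (segf h p q) a b.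
Proof.
  intros Hh. apply ex_RInt_continuous. intros z _. apply Rcont_continuous, segf_Rcont, Hh.
Qed.

Lemma ex_RInt_segf_mod h p q a b : Ccont h -> ex_RInt (fun t => Cmod (segf h p q t)) a b.
Proof.
  intros Hh. apply (ex_RInt_continuous (V:=R_CompleteNormedModule)). intros z _. apply Rcont_Cmod, segf_Rcont, Hh.
Qed.

Definition J h p q : C := RInt (V:=C_R_CompleteNormedModule) (segf h p q) 0 1.
Definition I h p q : C := Cmult (Cminus q p) (J h p q).

Lemma J_correct h p q : Ccont h -> is_RInt (V:=C_R_NormedModule) (segf h p q) 0 1 (J h p q).
Proof. intros Hh. apply (RInt_correct (V:=C_R_CompleteNormedModule)). apply ex_RInt_segf, Hh. Qed.

Lemma is_RInt_CR_unique (g : R -> C) a b l1 l2 :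
  is_RInt (V:=C_R_NormedModule) g a b l1 -> is_RInt (V:=C_R_NormedModule) g a b l2 -> l1 = l2.
Proof.
  intros H1 H2. apply (is_RInt_unique (V:=C_R_CompleteNormedModule)) in H1.
  apply (is_RInt_unique (V:=C_R_CompleteNormedModule)) in H2. congruence.
Qed.

Lemma is_RInt_fst (g : R -> C) a b l : is_RInt (V:=C_R_NormedModule) g a b l -> is_RInt (fun t => fst (g t)) a b (fst l).
Proof. intros H. apply (is_RInt_fct_extend_fst (U:=R_NormedModule) (V:=R_NormedModule)). exact H. Qed.
Lemma is_RInt_snd (g : R -> C) a b l : is_RInt (V:=C_R_NormedModule) g a b l -> is_RInt (fun t => snd (g t)) a b (snd l).
Proof. intros H. apply (is_RInt_fct_extend_snd (U:=R_NormedModule) (V:=R_NormedModule)). exact H. Qed.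
Lemma is_RInt_pairC (g : R -> C) a b l1 l2 : is_RInt (fun t => fst (g t)) a b l1 -> is_RInt (fun t => snd (g t)) a b l2 -> is_RInt (V:=C_R_NormedModule) g a b (l1,l2).
Proof. intros H1 H2. exact (is_RInt_fct_extend_pair (U:=R_NormedModule) (V:=R_NormedModule) g a b l1 l2 H1 H2). Qed.

Lemma is_RInt_Cmult (c : C) (g : R -> C) a b l : is_RInt (V:=C_R_NormedModule) g a b l ->
  is_RInt (V:=C_R_NormedModule) (fun t => Cmult c (g t)) a b (Cmult c l).
Proof.
  intros H. pose proof (is_RInt_fst _ _ _ _ H) as H1. pose proof (is_RInt_snd _ _ _ _ H) as H2.
  destruct c as [c1 c2]. destruct l as [l1 l2]. simpl in H1, H2.
  apply is_RInt_pairC; simpl.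
  - apply (is_RInt_ext (fun t => minus (scal c1 (fst (g t))) (scal c2 (snd (g t))))).
    { intros; reflexivity. }
    apply (is_RInt_minus (V:=R_NormedModule)); apply (is_RInt_scal (V:=R_NormedModule)); auto.
  - apply (is_RInt_ext (fun t => plus (scal c1 (snd (g t))) (scal c2 (fst (g t))))).
    { intros; reflexivity. }
    apply (is_RInt_plus (V:=R_NormedModule)); apply (is_RInt_scal (V:=R_NormedModule)); auto.
Qed.

Lemma J_bound h p q : Ccont h -> Cmod (J h p q) <= RInt (fun t => Cmod (segf h p q t)) 0 1.
Proof.
  intros Hh. rewrite <- normCR.
  apply (norm_RInt_le (V:=C_R_NormedModule) (segf h p q) (fun t => Cmod (segf h p q t)) 0 1).
  - lra.
  - intros x _. rewrite normCR. lra.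
  - apply J_correct, Hh.
  - apply (RInt_correct (V:=R_CompleteNormedModule)). apply ex_RInt_segf_mod, Hh.
Qed.

Lemma J_bound_const h p q B : Ccont h -> (forall t, 0 < t < 1 -> Cmod (segf h p q t) <= B) ->
  Cmod (J h p q) <= B.
Proof.
  intros Hh HB. eapply Rle_trans. apply J_bound, Hh.
  replace B with (RInt (fun _ => B) 0 1).
  2:{ rewrite RInt_const. change (((1-0)*B)%R = B). ring. }
  apply RInt_le. lra. apply ex_RInt_segf_mod, Hh. apply ex_RInt_const.
  intros; apply HB; lra.
Qed.

Lemma I_bound h p q B : Ccont h -> (forall t, 0 < t < 1 -> Cmod (segf h p q t) <= B) ->
  Cmod (I h p q) <= Cmod (Cminus q p) * B.
Proof.
  intros Hh HB. unfold I. rewrite Cmod_mult. apply Rmult_le_compat_l. apply Cmod_ge_0.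
  apply J_bound_const; auto.
Qed.

Lemma Ccont_plus h1 h2 : Ccont h1 -> Ccont h2 -> Ccont (fun w => Cplus (h1 w) (h2 w)).
Proof.
  intros H1 H2 z eps Heps.
  destruct (H1 z (eps/2) ltac:(lra)) as [d1 [Hd1 Hd1']].
  destruct (H2 z (eps/2) ltac:(lra)) as [d2 [Hd2 Hd2']].
  exists (Rmin d1 d2). split. apply Rmin_pos; auto. intros y Hy.
  specialize (Hd1' y (Rlt_le_trans _ _ _ Hy (Rmin_l _ _))).
  specialize (Hd2' y (Rlt_le_trans _ _ _ Hy (Rmin_r _ _))).
  replace (Cminus (Cplus (h1 y) (h2 y)) (Cplus (h1 z) (h2 z))) with
    (Cplus (Cminus (h1 y) (h1 z)) (Cminus (h2 y) (h2 z))) by ring.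
  eapply Rle_lt_trans. apply Cmod_triangle. lra.
Qed.

Lemma Ccont_scal c h : Ccont h -> Ccont (fun w => Cmult c (h w)).
Proof.
  intros H z eps Heps.
  destruct (H z (eps / (Cmod c + 1))) as [d [Hd Hd']].
  { apply Rdiv_lt_0_compat; auto. pose proof (Cmod_ge_0 c); lra. }
  exists d. split; auto. intros y Hy. specialize (Hd' y Hy).
  replace (Cminus (Cmult c (h y)) (Cmult c (h z))) with (Cmult c (Cminus (h y) (h z))) by ring.
  rewrite Cmod_mult. pose proof (Cmod_ge_0 c). pose proof (Cmod_ge_0 (Cminus (h y) (h z))).
  apply Rle_lt_trans with ((Cmod c + 1) * Cmod (Cminus (h y) (h z))). nra.
  apply Rmult_lt_reg_r with (/ (Cmod c + 1)). apply Rinv_0_lt_compat; lra.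
  replace ((Cmod c + 1) * Cmod (Cminus (h y) (h z)) * / (Cmod c + 1)) with (Cmod (Cminus (h y) (h z))) by (field; lra).
  exact Hd'.
Qed.

Lemma Ccont_const c : Ccont (fun _ => c).
Proof.
  intros z eps Heps. exists 1. split. lra. intros. replace (Cminus c c) with (RtoC 0) by ring.
  rewrite Cmod_0. lra.
Qed.

Lemma Ccont_id : Ccont (fun w => w).
Proof. intros z eps Heps. exists eps. split; auto. Qed.

Lemma J_plus h1 h2 p q : Ccont h1 -> Ccont h2 ->
  J (fun w => Cplus (h1 w) (h2 w)) p q = Cplus (J h1 p q) (J h2 p q).
Proof.
  intros H1 H2. apply (is_RInt_CR_unique (segf (fun w => Cplus (h1 w) (h2 w)) p q) 0 1).
  - apply J_correct, Ccont_plus; auto.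
  - apply (is_RInt_plus (V:=C_R_NormedModule) (segf h1 p q) (segf h2 p q)); apply J_correct; auto.
Qed.

Lemma J_scal c h p q : Ccont h -> J (fun w => Cmult c (h w)) p q = Cmult c (J h p q).
Proof.
  intros H. apply (is_RInt_CR_unique (segf (fun w => Cmult c (h w)) p q) 0 1).
  - apply J_correct, Ccont_scal; auto.
  - apply (is_RInt_Cmult c (segf h p q)). apply J_correct; auto.
Qed.

Lemma J_const c p q : J (fun _ => c) p q = c.
Proof.
  apply (is_RInt_CR_unique (segf (fun _ => c) p q) 0 1).
  - apply J_correct, Ccont_const.
  - unfold segf.
    pose proof (is_RInt_const (V:=C_R_NormedModule) 0 1 c) as H.
    match type of H with is_RInt _ _ _ ?v => replace v with c in H end. exact H.
    destruct c as [c1 c2]. simpl. unfold prod_scal; simpl.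
    change (scal (1-0) (c1,c2)) with (prod_scal (1-0) (c1,c2)). unfold prod_scal; simpl. change (scal (1-0) c1) with ((1-0)*c1). change (scal (1-0) c2) with ((1-0)*c2). f_equal; ring.
Qed.

Lemma is_RInt_t : is_RInt (fun t => t) 0 1 (1/2).
Proof.
  replace (1/2) with (minus ((fun t => t^2/2) 1) ((fun t => t^2/2) 0)).
  2:{ change ((1^2/2 - 0^2/2)%R = 1/2). field. }
  apply (is_RInt_derive (V:=R_CompleteNormedModule) (fun t => t^2/2)).
  - intros x _. auto_derive; auto. field.
  - intros x _. apply continuous_id.
Qed.

Lemma is_RInt_affine a b : is_RInt (fun t => a + b * t) 0 1 (a + b * (1/2)).
Proof.
  replace (a + b * (1/2)) with (minus ((fun t => a*t + b*(t^2/2)) 1) ((fun t => a*t + b*(t^2/2)) 0)).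
  2:{ change ((a*1 + b*(1^2/2) - (a*0 + b*(0^2/2)))%R = a + b*(1/2)). field. }
  apply (is_RInt_derive (V:=R_CompleteNormedModule) (fun t => a*t + b*(t^2/2))).
  - intros x _. auto_derive; auto. field.
  - intros x _. apply (continuous_plus (V:=R_NormedModule)). apply continuous_const.
    apply (continuous_scal_r (K:=R_AbsRing) (V:=R_NormedModule)). apply continuous_id.
Qed.

Lemma J_id p q : J (fun w => w) p q = Cmult (Cplus p q) (RtoC (/2)).
Proof.
  apply (is_RInt_CR_unique (segf (fun w => w) p q) 0 1).
  - apply J_correct, Ccont_id.
  - unfold segf. destruct p as [p1 p2], q as [q1 q2].
    replace (Cmult (Cplus (p1,p2) (q1,q2)) (RtoC (/2))) with
      (p1 + (q1 - p1) * (1/2), p2 + (q2 - p2) * (1/2)).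
    2:{ apply injective_projections; simpl; field. }
    apply is_RInt_pairC; simpl.
    + apply (is_RInt_ext (V:=R_NormedModule) (fun t => p1 + (q1-p1)*t)).
      { intros; simpl; ring. }
      apply is_RInt_affine.
    + apply (is_RInt_ext (V:=R_NormedModule) (fun t => p2 + (q2-p2)*t)).
      { intros; simpl; ring. }
      apply is_RInt_affine.
Qed.

Lemma scalCR (k : R) (x : C) : scal (V:=C_R_NormedModule) k x = Cmult (RtoC k) x.
Proof.
  destruct x as [x1 x2]. change (scal (V:=C_R_NormedModule) k (x1,x2)) with (prod_scal k (x1,x2)).
  unfold prod_scal; simpl. change (scal k x1) with (k*x1). change (scal k x2) with (k*x2).
  apply injective_projections; simpl; ring.
Qed.

Lemma J_rev h p q : Ccont h -> J h q p = J h p q.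
Proof.
  intros Hh. pose proof (J_correct h p q Hh) as H.
  apply (is_RInt_swap (V:=C_R_NormedModule)) in H.
  replace 1 with (-1 * 0 + 1) in H at 1 by ring. replace 0 with (-1 * 1 + 1) in H at 2 by ring.
  apply (is_RInt_comp_lin (V:=C_R_NormedModule)) in H.
  apply (is_RInt_opp (V:=C_R_NormedModule)) in H.
  rewrite opp_opp in H.
  apply (is_RInt_CR_unique (segf h q p) 0 1). apply J_correct, Hh.
  eapply (is_RInt_ext (V:=C_R_NormedModule)); [|exact H].
  intros x _. simpl. rewrite scalCR. change (opp (G:=C_R_NormedModule) ?a) with (Copp a). unfold segf.
  replace (Cplus q (Cmult (RtoC x) (Cminus p q))) with (Cplus p (Cmult (RtoC (-1 * x + 1)) (Cminus q p))).
  ring. rewrite RtoC_plus, RtoC_mult. ring.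
Qed.

Lemma I_rev h p q : Ccont h -> I h q p = Copp (I h p q).
Proof. intros Hh. unfold I. rewrite J_rev by auto. ring. Qed.

Definition midp (p q : C) : C := Cmult (Cplus p q) (RtoC (/2)).

Lemma I_split h p q : Ccont h -> I h p q = Cplus (I h p (midp p q)) (I h (midp p q) q).
Proof.
  intros Hh. set (g := segf h p q).
  set (L1 := RInt (V:=C_R_CompleteNormedModule) g 0 (1/2)).
  set (L2 := RInt (V:=C_R_CompleteNormedModule) g (1/2) 1).
  assert (H1 : is_RInt (V:=C_R_NormedModule) g 0 (1/2) L1).
  { apply (RInt_correct (V:=C_R_CompleteNormedModule)). apply ex_RInt_segf, Hh. }
  assert (H2 : is_RInt (V:=C_R_NormedModule) g (1/2) 1 L2).
  { apply (RInt_correct (V:=C_R_CompleteNormedModule)). apply ex_RInt_segf, Hh. }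
  assert (E0 : J h p q = Cplus L1 L2).
  { apply (is_RInt_CR_unique g 0 1). apply J_correct, Hh.
    exact (is_RInt_Chasles (V:=C_R_NormedModule) g 0 (1/2) 1 L1 L2 H1 H2). }
  assert (E1 : J h p (midp p q) = Cmult (RtoC 2) L1).
  { apply (is_RInt_CR_unique (segf h p (midp p q)) 0 1). apply J_correct, Hh.
    assert (H : is_RInt (V:=C_R_NormedModule) g (1/2*0+0) (1/2*1+0) L1).
    { replace (1/2*0+0) with 0 by field. replace (1/2*1+0) with (1/2) by field. exact H1. }
    apply (is_RInt_comp_lin (V:=C_R_NormedModule)) in H.
    apply (is_RInt_scal (V:=C_R_NormedModule) _ _ _ 2) in H. rewrite scalCR in H.
    eapply (is_RInt_ext (V:=C_R_NormedModule)); [|exact H].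
    intros x _. cbv beta. rewrite !scalCR. unfold g, segf, midp.
    replace (Cmult (RtoC 2) (Cmult (RtoC (1/2)) (h (Cplus p (Cmult (RtoC (1 / 2 * x + 0)) (Cminus q p))))))
      with (h (Cplus p (Cmult (RtoC (1 / 2 * x + 0)) (Cminus q p)))).
    2:{ rewrite Cmult_assoc, <- RtoC_mult. replace (2 * (1/2)) with 1 by field. ring. }
    f_equal. rewrite RtoC_plus, RtoC_mult, RtoC_div by lra.
    apply injective_projections; simpl; field. }
  assert (E2 : J h (midp p q) q = Cmult (RtoC 2) L2).
  { apply (is_RInt_CR_unique (segf h (midp p q) q) 0 1). apply J_correct, Hh.
    assert (H : is_RInt (V:=C_R_NormedModule) g (1/2*0+1/2) (1/2*1+1/2) L2).
    { replace (1/2*0+1/2) with (1/2) by field. replace (1/2*1+1/2) with 1 by field. exact H2. }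
    apply (is_RInt_comp_lin (V:=C_R_NormedModule)) in H.
    apply (is_RInt_scal (V:=C_R_NormedModule) _ _ _ 2) in H. rewrite scalCR in H.
    eapply (is_RInt_ext (V:=C_R_NormedModule)); [|exact H].
    intros x _. cbv beta. rewrite !scalCR. unfold g, segf, midp.
    replace (Cmult (RtoC 2) (Cmult (RtoC (1/2)) (h (Cplus p (Cmult (RtoC (1 / 2 * x + 1/2)) (Cminus q p))))))
      with (h (Cplus p (Cmult (RtoC (1 / 2 * x + 1/2)) (Cminus q p)))).
    2:{ rewrite Cmult_assoc, <- RtoC_mult. replace (2 * (1/2)) with 1 by field. ring. }
    f_equal. rewrite RtoC_plus, RtoC_mult, RtoC_div by lra.
    apply injective_projections; simpl; field. }
  unfold I. rewrite E0, E1, E2. unfold midp.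
  apply injective_projections; simpl; field.
Qed.


Lemma half_pow_small (eps : R) : 0 < eps -> exists N, forall n, (N <= n)%nat -> (/2)^n < eps.
Proof.
  intros He. pose proof (is_lim_seq_geom (/2)) as H.
  assert (Rabs (/2) < 1) by (rewrite Rabs_right; lra).
  specialize (H H0). apply is_lim_seq_spec in H.
  destruct (H (mkposreal eps He)) as [N HN]. exists N. intros n Hn.
  specialize (HN n Hn). simpl in HN. rewrite Rminus_0_r in HN.
  eapply Rle_lt_trans. apply Rle_abs. exact HN.
Qed.

Lemma geom_cauchy (u : nat -> R) (K : R) :
  (forall n, Rabs (u (S n) - u n) <= K * (/2)^n) ->
  exists X, forall n, Rabs (u n - X) <= 2 * K * (/2)^n.
Proof.
  intros H.
  assert (HK : 0 <= K). { specialize (H O). simpl in H. pose proof (Rabs_pos (u 1%nat - u 0%nat)). lra. }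
  assert (Hk : forall n k, Rabs (u (n+k)%nat - u n) <= 2*K*(/2)^n - 2*K*(/2)^(n+k)).
  { intros n k. induction k as [|k IH].
    - rewrite Nat.add_0_r. unfold Rminus. rewrite Rplus_opp_r, Rabs_R0. lra.
    - replace (n + S k)%nat with (S (n+k)) by lia.
      replace (u (S (n + k)) - u n) with ((u (S (n+k)) - u (n+k)%nat) + (u (n+k)%nat - u n)) by ring.
      eapply Rle_trans. apply Rabs_triang. specialize (H (n+k)%nat).
      simpl (_ ^ S _). lra. }
  assert (Hc : ex_lim_seq_cauchy u).
  { intros eps. destruct (half_pow_small (eps / (4*K+1))) as [N HN].
    { apply Rdiv_lt_0_compat. destruct eps; simpl; lra. lra. }
    exists N. intros n m Hn Hm.
    pose proof (Hk N (n - N)%nat) as H1. pose proof (Hk N (m - N)%nat) as H2.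
    replace (N + (n - N))%nat with n in H1 by lia. replace (N + (m - N))%nat with m in H2 by lia.
    pose proof (pow_lt (/2) n ltac:(lra)). pose proof (pow_lt (/2) m ltac:(lra)).
    specialize (HN N (le_n N)).
    assert (4 * K * (/2)^N < eps).
    { apply Rle_lt_trans with ((4*K+1) * (/2)^N). pose proof (pow_lt (/2) N ltac:(lra)). nra.
      apply Rmult_lt_reg_r with (/ (4*K+1)). apply Rinv_0_lt_compat; lra.
      replace ((4 * K + 1) * (/ 2) ^ N * / (4 * K + 1)) with ((/2)^N) by (field; lra).
      exact HN. }
    replace (u n - u m) with ((u n - u N) - (u m - u N)) by ring.
    eapply Rle_lt_trans. apply Rabs_triang. rewrite Rabs_Ropp.
    assert (0 <= 2*K * (/2)^n) by nra. assert (0 <= 2*K * (/2)^m) by nra. lra. }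
  apply ex_lim_seq_cauchy_corr in Hc. destruct Hc as [X HX].
  exists X. intros n.
  apply (is_lim_seq_incr_n u n) in HX.
  assert (Hb : forall k, u n - 2*K*(/2)^n <= u (k + n)%nat <= u n + 2*K*(/2)^n).
  { intros k. specialize (Hk n k). replace (k+n)%nat with (n+k)%nat by lia.
    pose proof (pow_lt (/2) (n+k) ltac:(lra)). apply Rabs_le_between in Hk.
    assert (0 <= 2*K * (/2)^(n+k)) by nra. lra. }
  pose proof (is_lim_seq_le _ _ _ _ (fun k => proj1 (Hb k)) (is_lim_seq_const _) HX) as L1.
  pose proof (is_lim_seq_le _ _ _ _ (fun k => proj2 (Hb k)) HX (is_lim_seq_const _)) as L2.
  simpl in L1, L2. apply Rabs_le. lra.
Qed.

Definition Tri h a b c := Cplus (Cplus (I h a b) (I h b c)) (I h c a).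
Definition Per a b c := Cmod (Cminus b a) + Cmod (Cminus c b) + Cmod (Cminus a c).

Lemma Tri_sub h a b c : Ccont h ->
  Tri h a b c = Cplus (Cplus (Tri h a (midp a b) (midp c a)) (Tri h (midp a b) b (midp b c)))
                      (Cplus (Tri h (midp c a) (midp b c) c) (Tri h (midp b c) (midp c a) (midp a b))).
Proof.
  intros Hh. unfold Tri.
  rewrite (I_split h a b Hh), (I_split h b c Hh), (I_split h c a Hh).
  rewrite (I_rev h (midp c a) (midp a b) Hh), (I_rev h (midp a b) (midp b c) Hh),
          (I_rev h (midp b c) (midp c a) Hh).
  ring.
Qed.

Lemma Cmod_half z : Cmod (Cmult z (RtoC (/2))) = Cmod z / 2.
Proof. rewrite Cmod_mult, Cmod_R, Rabs_right by lra. field. Qed.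

Lemma Per_sub0 a b c : Per a (midp a b) (midp c a) = Per a b c / 2.
Proof.
  unfold Per, midp.
  replace (Cminus (Cmult (Cplus a b) (RtoC (/ 2))) a) with (Cmult (Cminus b a) (RtoC (/2))) by (apply injective_projections; simpl; field).
  replace (Cminus (Cmult (Cplus c a) (RtoC (/ 2))) (Cmult (Cplus a b) (RtoC (/ 2)))) with (Cmult (Cminus c b) (RtoC (/2))) by (apply injective_projections; simpl; field).
  replace (Cminus a (Cmult (Cplus c a) (RtoC (/ 2)))) with (Cmult (Cminus a c) (RtoC (/2))) by (apply injective_projections; simpl; field).
  rewrite !Cmod_half. field.
Qed.
Lemma Per_sub1 a b c : Per (midp a b) b (midp b c) = Per a b c / 2.
Proof.
  unfold Per, midp.
  replace (Cminus b (Cmult (Cplus a b) (RtoC (/ 2)))) with (Cmult (Cminus b a) (RtoC (/2))) by (apply injective_projections; simpl; field).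
  replace (Cminus (Cmult (Cplus b c) (RtoC (/ 2))) b) with (Cmult (Cminus c b) (RtoC (/2))) by (apply injective_projections; simpl; field).
  replace (Cminus (Cmult (Cplus a b) (RtoC (/ 2))) (Cmult (Cplus b c) (RtoC (/ 2)))) with (Cmult (Cminus a c) (RtoC (/2))) by (apply injective_projections; simpl; field).
  rewrite !Cmod_half. field.
Qed.
Lemma Per_sub2 a b c : Per (midp c a) (midp b c) c = Per a b c / 2.
Proof.
  unfold Per, midp.
  replace (Cminus (Cmult (Cplus b c) (RtoC (/ 2))) (Cmult (Cplus c a) (RtoC (/ 2)))) with (Cmult (Cminus b a) (RtoC (/2))) by (apply injective_projections; simpl; field).
  replace (Cminus c (Cmult (Cplus b c) (RtoC (/ 2)))) with (Cmult (Cminus c b) (RtoC (/2))) by (apply injective_projections; simpl; field).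
  replace (Cminus (Cmult (Cplus c a) (RtoC (/ 2))) c) with (Cmult (Cminus a c) (RtoC (/2))) by (apply injective_projections; simpl; field).
  rewrite !Cmod_half. field.
Qed.
Lemma Per_sub3 a b c : Per (midp b c) (midp c a) (midp a b) = Per a b c / 2.
Proof.
  unfold Per, midp.
  replace (Cminus (Cmult (Cplus c a) (RtoC (/ 2))) (Cmult (Cplus b c) (RtoC (/ 2)))) with (Cmult (Copp (Cminus b a)) (RtoC (/2))) by (apply injective_projections; simpl; field).
  replace (Cminus (Cmult (Cplus a b) (RtoC (/ 2))) (Cmult (Cplus c a) (RtoC (/ 2)))) with (Cmult (Copp (Cminus c b)) (RtoC (/2))) by (apply injective_projections; simpl; field).
  replace (Cminus (Cmult (Cplus b c) (RtoC (/ 2))) (Cmult (Cplus a b) (RtoC (/ 2)))) with (Cmult (Copp (Cminus a c)) (RtoC (/2))) by (apply injective_projections; simpl; field).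
  rewrite !Cmod_half, !Cmod_opp. field.
Qed.

Lemma Cmod_sub_sym x y : Cmod (Cminus x y) = Cmod (Cminus y x).
Proof. replace (Cminus x y) with (Copp (Cminus y x)) by ring. apply Cmod_opp. Qed.

Lemma vert_b a b c : Cmod (Cminus b a) <= Per a b c.
Proof. unfold Per. pose proof (Cmod_ge_0 (Cminus c b)). pose proof (Cmod_ge_0 (Cminus a c)). lra. Qed.
Lemma vert_c a b c : Cmod (Cminus c a) <= Per a b c.
Proof. unfold Per. rewrite (Cmod_sub_sym c a). pose proof (Cmod_ge_0 (Cminus c b)). pose proof (Cmod_ge_0 (Cminus b a)). lra. Qed.
Lemma vert_a a b c : Cmod (Cminus a a) <= Per a b c.
Proof. replace (Cminus a a) with (RtoC 0) by ring. rewrite Cmod_0. unfold Per.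
  pose proof (Cmod_ge_0 (Cminus c b)). pose proof (Cmod_ge_0 (Cminus b a)). pose proof (Cmod_ge_0 (Cminus a c)). lra. Qed.

Lemma edge_near (a p q : C) L t : Cmod (Cminus p a) <= L -> Cmod (Cminus q a) <= L -> 0 <= t <= 1 ->
  Cmod (Cminus (Cplus p (Cmult (RtoC t) (Cminus q p))) a) <= L.
Proof.
  intros Hp Hq Ht.
  replace (Cminus (Cplus p (Cmult (RtoC t) (Cminus q p))) a) with
    (Cplus (Cmult (RtoC (1 - t)) (Cminus p a)) (Cmult (RtoC t) (Cminus q a))).
  2:{ rewrite RtoC_minus. ring. }
  eapply Rle_trans. apply Cmod_triangle. rewrite !Cmod_mult, !Cmod_R, !Rabs_right by lra.
  nra.
Qed.

Lemma Tri_bound h a b c B : Ccont h ->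
  (forall w, Cmod (Cminus w a) <= Per a b c -> Cmod (h w) <= B) ->
  Cmod (Tri h a b c) <= Per a b c * B.
Proof.
  intros Hh HB. unfold Tri.
  assert (E1 : Cmod (I h a b) <= Cmod (Cminus b a) * B).
  { apply I_bound; auto. intros t Ht. apply HB. apply edge_near. apply vert_a. apply vert_b. lra. }
  assert (E2 : Cmod (I h b c) <= Cmod (Cminus c b) * B).
  { apply I_bound; auto. intros t Ht. apply HB. apply edge_near. apply vert_b. apply vert_c. lra. }
  assert (E3 : Cmod (I h c a) <= Cmod (Cminus a c) * B).
  { apply I_bound; auto. intros t Ht. apply HB. apply edge_near. apply vert_c. apply vert_a. lra. }
  eapply Rle_trans. apply Cmod_triangle. eapply Rle_trans. apply Rplus_le_compat_r. apply Cmod_triangle.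
  unfold Per. lra.
Qed.

Definition TriT h (tr : C*C*C) := let '(a,b,c) := tr in Tri h a b c.
Definition PerT (tr : C*C*C) := let '(a,b,c) := tr in Per a b c.
Definition V1 (tr : C*C*C) := let '(a,b,c) := tr in a.
Definition sub0 (tr : C*C*C) : C*C*C := let '(a,b,c) := tr in (a, midp a b, midp c a).
Definition sub1 (tr : C*C*C) : C*C*C := let '(a,b,c) := tr in (midp a b, b, midp b c).
Definition sub2 (tr : C*C*C) : C*C*C := let '(a,b,c) := tr in (midp c a, midp b c, c).
Definition sub3 (tr : C*C*C) : C*C*C := let '(a,b,c) := tr in (midp b c, midp c a, midp a b).

Definition best2 h (x y : C*C*C) := if Rle_dec (Cmod (TriT h x)) (Cmod (TriT h y)) then y else x.
Definition pick h tr := best2 h (best2 h (sub0 tr) (sub1 tr)) (best2 h (sub2 tr) (sub3 tr)).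

Definition Good tr tr' := PerT tr' = PerT tr / 2 /\ Cmod (Cminus (V1 tr') (V1 tr)) <= PerT tr.

Lemma best2_good h tr x y : Good tr x -> Good tr y -> Good tr (best2 h x y).
Proof. unfold best2; destruct Rle_dec; auto. Qed.

Lemma best2_ge h x y : Cmod (TriT h x) <= Cmod (TriT h (best2 h x y)) /\ Cmod (TriT h y) <= Cmod (TriT h (best2 h x y)).
Proof. unfold best2; destruct Rle_dec; lra. Qed.

Lemma pick_good h tr : Good tr (pick h tr).
Proof.
  destruct tr as [[a b] c]. unfold pick. apply best2_good; apply best2_good; split; simpl.
  - apply Per_sub0.
  - apply vert_a.
  - apply Per_sub1.
  - unfold midp. replace (Cminus (Cmult (Cplus a b) (RtoC (/ 2))) a) with (Cmult (Cminus b a) (RtoC (/2)))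
      by (apply injective_projections; simpl; field).
    rewrite Cmod_half. pose proof (vert_b a b c). pose proof (Cmod_ge_0 (Cminus b a)). lra.
  - apply Per_sub2.
  - unfold midp. replace (Cminus (Cmult (Cplus c a) (RtoC (/ 2))) a) with (Cmult (Cminus c a) (RtoC (/2)))
      by (apply injective_projections; simpl; field).
    rewrite Cmod_half. pose proof (vert_c a b c). pose proof (Cmod_ge_0 (Cminus c a)). lra.
  - apply Per_sub3.
  - unfold midp. replace (Cminus (Cmult (Cplus b c) (RtoC (/ 2))) a) with
      (Cmult (Cplus (Cminus b a) (Cminus c a)) (RtoC (/2))) by (apply injective_projections; simpl; field).
    rewrite Cmod_half. pose proof (vert_b a b c). pose proof (vert_c a b c).
    pose proof (Cmod_triangle (Cminus b a) (Cminus c a)). lra.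
Qed.

Lemma pick_bound h tr : Ccont h -> Cmod (TriT h tr) <= 4 * Cmod (TriT h (pick h tr)).
Proof.
  intros Hh. destruct tr as [[a b] c].
  pose proof (best2_ge h (sub0 (a,b,c)) (sub1 (a,b,c))) as [B0 B1].
  pose proof (best2_ge h (sub2 (a,b,c)) (sub3 (a,b,c))) as [B2 B3].
  pose proof (best2_ge h (best2 h (sub0 (a,b,c)) (sub1 (a,b,c))) (best2 h (sub2 (a,b,c)) (sub3 (a,b,c)))) as [B4 B5].
  fold (pick h (a,b,c)) in B4, B5.
  simpl in B0, B1, B2, B3. simpl TriT at 1. rewrite (Tri_sub h a b c Hh).
  eapply Rle_trans. apply Cmod_triangle. eapply Rle_trans. apply Rplus_le_compat; apply Cmod_triangle.
  cbn [sub0 sub1 sub2 sub3] in B4, B5. lra.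
Qed.

Fixpoint triseq h (tr : C*C*C) (n : nat) : C*C*C :=
  match n with O => tr | S k => pick h (triseq h tr k) end.

Lemma Tri_affine (c0 d : C) a b c : Tri (fun w => Cplus c0 (Cmult d w)) a b c = RtoC 0.
Proof.
  assert (HI : forall p q, I (fun w => Cplus c0 (Cmult d w)) p q =
     Cmult (Cminus q p) (Cplus c0 (Cmult d (Cmult (Cplus p q) (RtoC (/2)))))).
  { intros p q. unfold I. rewrite J_plus, J_const, J_scal, J_id; auto.
    apply Ccont_id. apply Ccont_const. apply Ccont_scal, Ccont_id. }
  unfold Tri. rewrite !HI. apply injective_projections; simpl; field.
Qed.

Lemma J_ext h1 h2 p q : (forall w, h1 w = h2 w) -> J h1 p q = J h2 p q.
Proof.
  intros H. unfold J, segf. f_equal. apply functional_extensionality. intros; apply H.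
Qed.

Lemma Tri_ext h1 h2 a b c : (forall w, h1 w = h2 w) -> Tri h1 a b c = Tri h2 a b c.
Proof. intros H. unfold Tri, I. rewrite !(J_ext h1 h2) by auto. reflexivity. Qed.

Lemma Tri_plus f g a b c : Ccont f -> Ccont g ->
  Tri (fun w => Cplus (f w) (g w)) a b c = Cplus (Tri f a b c) (Tri g a b c).
Proof. intros Hf Hg. unfold Tri, I. rewrite !J_plus by auto. ring. Qed.

Lemma pow_quarter n : 4 ^ n * ((/2)^n * (/2)^n) = 1.
Proof. rewrite <- !Rpow_mult_distr. replace (4 * (/2 * /2)) with 1 by field. apply pow1. Qed.

Theorem goursat h : entire h -> forall a b c, Tri h a b c = RtoC 0.
Proof.
  intros He a b c. pose proof (entire_Ccont h He) as Hc.
  set (L0 := Per a b c).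
  set (s := triseq h (a,b,c)).
  assert (HL0 : 0 <= L0).
  { unfold L0, Per. pose proof (Cmod_ge_0 (Cminus b a)). pose proof (Cmod_ge_0 (Cminus c b)).
    pose proof (Cmod_ge_0 (Cminus a c)). lra. }
  assert (Hper : forall n, PerT (s n) = L0 * (/2)^n).
  { induction n as [|n IH]. simpl. unfold L0; ring.
    change (s (S n)) with (pick h (s n)). destruct (pick_good h (s n)) as [E _].
    rewrite E, IH. simpl. field. }
  assert (Hmov : forall n, Cmod (Cminus (V1 (s (S n))) (V1 (s n))) <= L0 * (/2)^n).
  { intros n. change (s (S n)) with (pick h (s n)). destruct (pick_good h (s n)) as [_ E].
    rewrite <- Hper. exact E. }
  assert (Htri : forall n, Cmod (Tri h a b c) <= 4^n * Cmod (TriT h (s n))).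
  { induction n as [|n IH]. simpl. lra.
    change (s (S n)) with (pick h (s n)). pose proof (pick_bound h (s n) Hc).
    simpl. pose proof (pow_lt 4 n ltac:(lra)). nra. }
  destruct (geom_cauchy (fun n => Re (V1 (s n))) L0) as [X HX].
  { intros n. eapply Rle_trans; [|apply (Hmov n)]. eapply Rle_trans; [|apply re_le_Cmod]. simpl. unfold Re, Rminus; lra. }
  destruct (geom_cauchy (fun n => Im (V1 (s n))) L0) as [Y HY].
  { intros n. eapply Rle_trans; [|apply (Hmov n)]. eapply Rle_trans; [|apply im_le_Cmod]. simpl. unfold Im, Rminus; lra. }
  set (z0 := (X, Y) : C).
  assert (Hnear : forall n, Cmod (Cminus (V1 (s n)) z0) <= 4 * L0 * (/2)^n).
  { intros n. eapply Rle_trans. apply Cmod_le_sum. specialize (HX n). specialize (HY n).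
    simpl in HX, HY |- *. unfold Re, Im in *; simpl in *. unfold Rminus in *. lra. }
  destruct (He z0) as [d Hd].
  assert (Hkey : forall eps, 0 < eps -> Cmod (Tri h a b c) <= eps * (5 * L0^2)).
  { intros eps Heps.
    destruct (is_derive_C_bound h z0 d Hd (mkposreal eps Heps)) as [del Hdel]. simpl in Hdel.
    destruct (half_pow_small (del / (5 * L0 + 1))) as [n Hn].
    { apply Rdiv_lt_0_compat. apply cond_pos. lra. }
    specialize (Hn n (le_n n)).
    assert (Hsmall : 5 * (L0 * (/2)^n) < del).
    { pose proof (pow_lt (/2) n ltac:(lra)).
      apply Rle_lt_trans with ((5 * L0 + 1) * (/2)^n). nra.
      apply Rmult_lt_reg_r with (/ (5*L0+1)). apply Rinv_0_lt_compat; lra.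
      replace ((5 * L0 + 1) * (/ 2) ^ n * / (5 * L0 + 1)) with ((/2)^n) by (field; lra). exact Hn. }
    set (c0 := Cminus (h z0) (Cmult z0 d)).
    set (r := fun w => Cplus (h w) (Cplus (Copp c0) (Cmult (Copp d) w))).
    assert (Hr : Ccont r).
    { apply Ccont_plus. auto. apply Ccont_plus. apply Ccont_const. apply Ccont_scal, Ccont_id. }
    assert (Hrw : forall w, Cmod (Cminus w z0) < del -> Cmod (r w) <= eps * Cmod (Cminus w z0)).
    { intros w Hw. specialize (Hdel w Hw).
      replace (r w) with (Cminus (Cminus (h w) (h z0)) (Cmult (Cminus w z0) d)).
      exact Hdel. unfold r, c0. ring. }
    specialize (Htri n). destruct (s n) as [[p q] u] eqn:Hs. simpl in Htri.
    assert (HT : Tri h p q u = Tri r p q u).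
    { rewrite (Tri_ext h (fun w => Cplus (r w) (Cplus c0 (Cmult d w)))).
      rewrite Tri_plus, Tri_affine. ring. auto. apply Ccont_plus. apply Ccont_const. apply Ccont_scal, Ccont_id.
      intros w. unfold r. ring. }
    assert (HP : Per p q u = L0 * (/2)^n) by (rewrite <- Hper, Hs; reflexivity).
    assert (HV : Cmod (Cminus p z0) <= 4 * L0 * (/2)^n) by (specialize (Hnear n); rewrite Hs in Hnear; exact Hnear).
    assert (HB : Cmod (Tri r p q u) <= Per p q u * (eps * (5 * (L0 * (/2)^n)))).
    { apply Tri_bound; auto. intros w Hw. rewrite HP in Hw.
      assert (Hwz : Cmod (Cminus w z0) <= 5 * (L0 * (/2)^n)).
      { replace (Cminus w z0) with (Cplus (Cminus w p) (Cminus p z0)) by ring.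
        eapply Rle_trans. apply Cmod_triangle. lra. }
      eapply Rle_trans. apply Hrw. lra. apply Rmult_le_compat_l; lra. }
    rewrite HT in Htri. rewrite HP in HB.
    pose proof (pow_lt 4 n ltac:(lra)).
    eapply Rle_trans. apply Htri.
    apply Rle_trans with (4^n * (L0 * (/2)^n * (eps * (5 * (L0 * (/2)^n))))).
    apply Rmult_le_compat_l; lra.
    replace (4 ^ n * (L0 * (/ 2) ^ n * (eps * (5 * (L0 * (/ 2) ^ n)))))
      with ((4 ^ n * ((/2)^n * (/2)^n)) * (eps * (5 * L0^2))) by ring.
    rewrite pow_quarter. lra. }
  apply Cmod_eq_0. apply Rle_antisym; [|apply Cmod_ge_0].
  apply Rnot_lt_le. intros Hpos.
  set (K := 5 * L0^2 + 1).
  assert (HK : 0 < K) by (unfold K; nra).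
  specialize (Hkey (Cmod (Tri h a b c) / (2 * K))).
  assert (0 < Cmod (Tri h a b c) / (2 * K)) by (apply Rdiv_lt_0_compat; lra).
  specialize (Hkey H).
  assert (Cmod (Tri h a b c) / (2 * K) * (5 * L0 ^ 2) <= Cmod (Tri h a b c) / 2).
  { unfold Rdiv. replace (Cmod (Tri h a b c) * / 2) with (Cmod (Tri h a b c) * / (2*K) * K) by (field; lra).
    apply Rmult_le_compat_l. left; exact H. unfold K; lra. }
  lra.
Qed.


Lemma seg_int_eq h z : Ccont h -> seg_int h z = I h (RtoC 0) z.
Proof.
  intros Hh. pose proof (J_correct h (RtoC 0) z Hh) as H.
  pose proof (is_RInt_fst _ _ _ _ H) as H1. pose proof (is_RInt_snd _ _ _ _ H) as H2.
  unfold seg_int, I.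
  replace (Cminus z (RtoC 0)) with z by ring. f_equal.
  assert (E : forall t, segf h (RtoC 0) z t = h (Cmult (RtoC t) z)).
  { intros t. unfold segf. f_equal. ring. }
  apply injective_projections; simpl.
  - apply (is_RInt_unique (V:=R_CompleteNormedModule)).
    eapply (is_RInt_ext (V:=R_NormedModule)); [|exact H1]. intros x _. cbv beta. rewrite E. reflexivity.
  - apply (is_RInt_unique (V:=R_CompleteNormedModule)).
    eapply (is_RInt_ext (V:=R_NormedModule)); [|exact H2]. intros x _. cbv beta. rewrite E. reflexivity.
Qed.

Lemma I_diff h z0 y : entire h -> Cminus (I h (RtoC 0) y) (I h (RtoC 0) z0) = I h z0 y.
Proof.
  intros He. pose proof (goursat h He (RtoC 0) z0 y) as G. unfold Tri in G.
  rewrite (I_rev h (RtoC 0) y (entire_Ccont h He)) in G.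
  apply (f_equal (fun x => Cplus x (I h (RtoC 0) y))) in G.
  replace (Cplus (RtoC 0) (I h (RtoC 0) y)) with (I h (RtoC 0) y) in G by ring.
  rewrite <- G. ring.
Qed.

Lemma Cd_segI h z0 : entire h -> Cd (fun z => I h (RtoC 0) z) z0 (h z0).
Proof.
  intros He. pose proof (entire_Ccont h He) as Hc.
  apply is_derive_C_of. intros eps.
  destruct (Hc z0 (eps/2)) as [d [Hd Hd']]. { destruct eps; simpl; lra. }
  exists (mkposreal d Hd). intros y Hy. simpl in Hy.
  rewrite I_diff by auto. unfold I.
  replace (Cminus (Cmult (Cminus y z0) (J h z0 y)) (Cmult (Cminus y z0) (h z0)))
    with (Cmult (Cminus y z0) (J (fun w => Cplus (h w) (Copp (h z0))) z0 y)).
  2:{ rewrite J_plus, J_const. ring. auto. apply Ccont_const. }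
  rewrite Cmod_mult. rewrite Rmult_comm. apply Rmult_le_compat_r. apply Cmod_ge_0.
  apply Rle_trans with (eps/2). 2:{ destruct eps; simpl; lra. }
  apply J_bound_const. apply Ccont_plus; auto. apply Ccont_const.
  intros t Ht. unfold segf. left. apply Hd'.
  replace (Cminus (Cplus z0 (Cmult (RtoC t) (Cminus y z0))) z0) with (Cmult (RtoC t) (Cminus y z0)) by ring.
  rewrite Cmod_mult, Cmod_R, Rabs_right by lra. pose proof (Cmod_ge_0 (Cminus y z0)). nra.
Qed.

Lemma entire_seg_int h : entire h -> entire (fun z => seg_int h z).
Proof.
  intros He z. exists (h z). apply Cd_ext with (fun z => I h (RtoC 0) z).
  intros w. rewrite seg_int_eq; auto. apply entire_Ccont; auto.
  apply Cd_segI; auto.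
Qed.

Lemma entire_ext f g : (forall w, f w = g w) -> entire f -> entire g.
Proof. intros E H z. destruct (H z) as [l Hl]. exists l. eapply Cd_ext; eauto. Qed.

Lemma entire_K a lambda m f : entire f -> entire (K_op a lambda m f).
Proof.
  intros Hf. unfold K_op.
  apply entire_mult. apply entire_const.
  apply entire_mult.
  - apply (entire_comp Cexp (fun z => Cmult lambda (Cpow z m))). apply entire_Cexp.
    apply entire_mult. apply entire_const. apply entire_pow.
  - apply entire_seg_int.
    apply entire_mult.
    + apply (entire_comp Cexp (fun w => Copp (Cmult lambda (Cpow w m)))). apply entire_Cexp.
      apply (entire_ext (fun w => Cmult (RtoC (-1)) (Cmult lambda (Cpow w m)))).
      { intros w. apply injective_projections; simpl; ring. }
      apply entire_mult. apply entire_const. apply entire_mult. apply entire_const. apply entire_pow.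
    + apply entire_mult. apply entire_pow. exact Hf.
Qed.


Lemma lub_facts (E : R -> Prop) M x0 : E x0 -> (forall x, E x -> x <= M) ->
  (forall x, E x -> x <= real (Lub_Rbar E)) /\
  (forall B, (forall x, E x -> x <= B) -> real (Lub_Rbar E) <= B).
Proof.
  intros H0 HM. destruct (Lub_Rbar_correct E) as [Hub Hl].
  destruct (Lub_Rbar E) as [l| |] eqn:EL.
  - split.
    + intros x Hx. specialize (Hub x Hx). simpl in Hub. exact Hub.
    + intros B HB. apply (Hl (Finite B)). intros x Hx. simpl. apply HB, Hx.
  - exfalso. specialize (Hl (Finite M)). simpl in Hl. apply Hl. intros x Hx. simpl. apply HM, Hx.
  - exfalso. specialize (Hub x0 H0). simpl in Hub. exact Hub.
Qed.

Lemma one_pos : 0 < Cmod (RtoC 1).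
Proof. rewrite Cmod_1. lra. Qed.

Lemma fock_weight_ge0 alpha m f z : 0 <= fock_weight alpha m f z.
Proof. unfold fock_weight. pose proof (exp_pos (- alpha * Cmod z ^ m)). pose proof (Cmod_ge_0 (f z)). nra. Qed.

Lemma fock_norm_facts alpha m f : in_fock alpha m f ->
  (forall z, 0 < Cmod z -> fock_weight alpha m f z <= fock_norm alpha m f) /\ 0 <= fock_norm alpha m f.
Proof.
  intros [_ [M HM]].
  destruct (lub_facts (fun x => exists z : C, 0 < Cmod z /\ x = fock_weight alpha m f z) M
    (fock_weight alpha m f (RtoC 1))) as [H1 H2].
  { exists (RtoC 1). split; auto. apply one_pos. }
  { intros x [z [Hz ->]]. apply HM, Hz. }
  assert (A : forall z, 0 < Cmod z -> fock_weight alpha m f z <= fock_norm alpha m f).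
  { intros z Hz. apply H1. exists z; auto. }
  split; auto. eapply Rle_trans; [apply fock_weight_ge0|]. apply (A (RtoC 1) one_pos).
Qed.

Lemma fock_norm_le alpha m g B : (forall z, 0 < Cmod z -> fock_weight alpha m g z <= B) ->
  fock_norm alpha m g <= B.
Proof.
  intros HB.
  destruct (lub_facts (fun x => exists z : C, 0 < Cmod z /\ x = fock_weight alpha m g z) B
    (fock_weight alpha m g (RtoC 1))) as [H1 H2].
  { exists (RtoC 1). split; auto. apply one_pos. }
  { intros x [z [Hz ->]]. apply HB, Hz. }
  apply H2. intros x [z [Hz ->]]. apply HB, Hz.
Qed.

Lemma f_bound alpha m f N w : 0 < Cmod w -> (forall z, 0 < Cmod z -> fock_weight alpha m f z <= N) ->
  Cmod (f w) <= N * exp (alpha * Cmod w ^ m).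
Proof.
  intros Hw H. specialize (H w Hw). unfold fock_weight in H.
  replace (Cmod (f w)) with (exp (alpha * Cmod w ^ m) * (exp (- alpha * Cmod w ^ m) * Cmod (f w))).
  - pose proof (exp_pos (alpha * Cmod w ^ m)). nra.
  - rewrite <- Rmult_assoc, <- exp_plus. replace (alpha * Cmod w ^ m + - alpha * Cmod w ^ m) with 0 by ring.
    rewrite exp_0. ring.
Qed.

Lemma int_G (m : nat) b : (1 <= m)%nat -> 0 < b ->
  is_RInt (fun t => t^(m-1) * exp (- b * (1 - t^m))) 0 1 ((1 - exp (- b)) / (b * INR m)).
Proof.
  intros Hm Hb. assert (HmR : 0 < INR m) by (apply lt_0_INR; lia).
  replace ((1 - exp (- b)) / (b * INR m)) with
    (minus ((fun t => exp (- b * (1 - t^m)) / (b * INR m)) 1) ((fun t => exp (- b * (1 - t^m)) / (b * INR m)) 0)).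
  2:{ change ((exp (- b * (1 - 1^m)) / (b * INR m) - exp (- b * (1 - 0^m)) / (b * INR m))%R =
        (1 - exp (- b)) / (b * INR m)).
      rewrite pow1, pow_i by lia. replace (- b * (1 - 1)) with 0 by ring. rewrite exp_0.
      replace (- b * (1 - 0)) with (- b) by ring. field. lra. }
  apply (is_RInt_derive (V:=R_CompleteNormedModule) (fun t => exp (- b * (1 - t^m)) / (b * INR m))).
  - intros x _. auto_derive. lra.
    replace (Init.Nat.pred m) with (m-1)%nat by lia. unfold Rminus. field. split; lra.
  - intros x _. apply (ex_derive_continuous (K:=R_AbsRing) (V:=R_NormedModule)). auto_derive. auto.
Qed.


Lemma exp_le x y : x <= y -> exp x <= exp y.
Proof. intros H. destruct (Req_dec x y). subst; lra. left; apply exp_increasing; lra. Qed.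

Definition Hfun (lambda : C) (m : nat) (f : C -> C) : C -> C :=
  fun w => Cmult (Cexp (Copp (Cmult lambda (Cpow w m)))) (Cmult (Cpow w (m - 1)) (f w)).

Lemma entire_Hfun lambda m f : entire f -> entire (Hfun lambda m f).
Proof.
  intros Hf. unfold Hfun. apply entire_mult.
  + apply (entire_comp Cexp (fun w => Copp (Cmult lambda (Cpow w m)))). apply entire_Cexp.
    apply (entire_ext (fun w => Cmult (RtoC (-1)) (Cmult lambda (Cpow w m)))).
    { intros w. apply injective_projections; simpl; ring. }
    apply entire_mult. apply entire_const. apply entire_mult. apply entire_const. apply entire_pow.
  + apply entire_mult. apply entire_pow. exact Hf.
Qed.

Lemma Hfun_bound alpha m lambda f N z t :
  (1 <= m)%nat -> Cmod lambda < alpha ->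
  (forall w, 0 < Cmod w -> fock_weight alpha m f w <= N) -> 0 <= N -> 0 < Cmod z -> 0 < t < 1 ->
  Cmod (Hfun lambda m f (Cmult (RtoC t) z)) <=
  N * exp (alpha * Cmod z ^ m - Re (Cmult lambda (Cpow z m))) * Cmod z ^ (m - 1) *
    (t ^ (m-1) * exp (- ((alpha - Cmod lambda) * Cmod z ^ m) * (1 - t ^ m))).
Proof.
  intros Hm Hl HN HN0 Hz Ht.
  set (r := Cmod z). set (u := Re (Cmult lambda (Cpow z m))).
  assert (Hw : Cmod (Cmult (RtoC t) z) = t * r).
  { rewrite Cmod_mult, Cmod_R, Rabs_right by lra. reflexivity. }
  assert (Hw0 : 0 < Cmod (Cmult (RtoC t) z)) by (rewrite Hw; unfold r; nra).
  pose proof (f_bound alpha m f N _ Hw0 HN) as Hf. rewrite Hw in Hf.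
  assert (Hre : Re (Copp (Cmult lambda (Cpow (Cmult (RtoC t) z) m))) = - (t^m * u)).
  { rewrite Cpow_mult_l, <- RtoC_pow. unfold u. destruct lambda as [l1 l2].
    destruct (Cpow z m) as [p1 p2]. simpl. ring. }
  assert (Hu : u <= Cmod lambda * r ^ m).
  { unfold u, r. eapply Rle_trans. apply Rle_abs. eapply Rle_trans. apply re_le_Cmod.
    rewrite Cmod_mult, Cmod_pow. lra. }
  assert (Htm : t ^ m <= 1). { rewrite <- (pow1 m). apply pow_incr. lra. }
  assert (Htm0 : 0 <= t ^ m) by (apply pow_le; lra).
  unfold Hfun. rewrite !Cmod_mult, Cmod_Cexp, Hre, Cmod_pow, Hw. fold r.
  rewrite Rpow_mult_distr. rewrite Rpow_mult_distr in Hf.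
  assert (Hexp : exp (- (t ^ m * u)) * exp (alpha * (t^m * r ^ m)) <=
                 exp (alpha * r ^ m - u) * exp (- ((alpha - Cmod lambda) * r ^ m) * (1 - t ^ m))).
  { rewrite <- !exp_plus. apply exp_le.
    assert (0 <= (1 - t^m) * (Cmod lambda * r^m - u)) by (apply Rmult_le_pos; lra). nra. }
  pose proof (exp_pos (- (t ^ m * u))) as E1.
  assert (Hp : 0 <= t ^ (m-1) * r ^ (m-1)).
  { apply Rmult_le_pos; apply pow_le; unfold r in *; lra. }
  apply Rle_trans with (exp (- (t ^ m * u)) * (t ^ (m - 1) * r ^ (m - 1) * (N * exp (alpha * (t ^ m * r ^ m))))).
  { apply Rmult_le_compat_l. lra. apply Rmult_le_compat_l; auto. }
  replace (exp (- (t ^ m * u)) * (t ^ (m - 1) * r ^ (m - 1) * (N * exp (alpha * (t ^ m * r ^ m)))))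
    with ((t ^ (m - 1) * r ^ (m - 1) * N) * (exp (- (t ^ m * u)) * exp (alpha * (t ^ m * r ^ m)))) by ring.
  replace (N * exp (alpha * r ^ m - u) * r ^ (m - 1) * (t ^ (m - 1) * exp (- ((alpha - Cmod lambda) * r ^ m) * (1 - t ^ m))))
    with ((t ^ (m - 1) * r ^ (m - 1) * N) * (exp (alpha * r ^ m - u) * exp (- ((alpha - Cmod lambda) * r ^ m) * (1 - t ^ m)))) by ring.
  apply Rmult_le_compat_l. apply Rmult_le_pos; auto. exact Hexp.
Qed.


Lemma K_weight alpha m a lambda f N z :
  (1 <= m)%nat -> Cmod lambda < alpha -> entire f ->
  (forall w, 0 < Cmod w -> fock_weight alpha m f w <= N) -> 0 <= N -> 0 < Cmod z ->
  fock_weight alpha m (K_op a lambda m f) z <= Cmod a / (alpha - Cmod lambda) * N.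
Proof.
  intros Hm Hl Hf HN HN0 Hz.
  assert (HmR : 0 < INR m) by (apply lt_0_INR; lia).
  set (r := Cmod z). set (u := Re (Cmult lambda (Cpow z m))).
  set (b := (alpha - Cmod lambda) * Cmod z ^ m).
  assert (Hr : 0 < r ^ m) by (apply pow_lt; exact Hz).
  assert (Hb : 0 < b) by (unfold b; fold r; apply Rmult_lt_0_compat; lra).
  set (K0 := N * exp (alpha * Cmod z ^ m - u) * Cmod z ^ (m - 1)).
  assert (HK0 : 0 <= K0).
  { unfold K0. apply Rmult_le_pos. apply Rmult_le_pos. lra. apply Rlt_le, exp_pos. apply pow_le. apply Cmod_ge_0. }
  pose proof (entire_Hfun lambda m f Hf) as HeH. pose proof (entire_Ccont _ HeH) as HcH.
  assert (HJ : Cmod (J (Hfun lambda m f) (RtoC 0) z) <= K0 * ((1 - exp (- b)) / (b * INR m))).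
  { eapply Rle_trans. apply J_bound, HcH.
    pose proof (is_RInt_scal _ _ _ K0 _ (int_G m b Hm Hb)) as HI.
    replace (K0 * ((1 - exp (- b)) / (b * INR m))) with
      (RInt (fun t => scal K0 (t ^ (m - 1) * exp (- b * (1 - t ^ m)))) 0 1).
    2:{ apply (is_RInt_unique (V:=R_CompleteNormedModule)). exact HI. }
    apply RInt_le. lra. apply ex_RInt_segf_mod, HcH. eexists; exact HI.
    intros t Ht. unfold segf.
    replace (Cplus (RtoC 0) (Cmult (RtoC t) (Cminus z (RtoC 0)))) with (Cmult (RtoC t) z) by ring.
    eapply Rle_trans. apply (Hfun_bound alpha m lambda f N z t); auto.
    change (scal K0 (t ^ (m - 1) * exp (- b * (1 - t ^ m)))) with (K0 * (t ^ (m - 1) * exp (- b * (1 - t ^ m)))).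
    unfold K0, b, u. lra. }
  unfold fock_weight.
  assert (HK : K_op a lambda m f z =
    Cmult (Cmult a (RtoC (INR m))) (Cmult (Cexp (Cmult lambda (Cpow z m))) (Cmult z (J (Hfun lambda m f) (RtoC 0) z)))).
  { unfold K_op. fold (Hfun lambda m f). rewrite seg_int_eq by auto. unfold I. f_equal. f_equal. f_equal. ring. }
  rewrite HK, !Cmod_mult, Cmod_R, Rabs_right, Cmod_Cexp by lra. fold u r.
  pose proof (Cmod_ge_0 a). pose proof (Cmod_ge_0 (J (Hfun lambda m f) (RtoC 0) z)).
  pose proof (exp_pos u) as Eu. pose proof (exp_pos (- alpha * r ^ m)) as Ea.
  apply Rle_trans with (exp (- alpha * r ^ m) * (Cmod a * INR m * (exp u * (r * (K0 * ((1 - exp (- b)) / (b * INR m))))))).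
  { apply Rmult_le_compat_l. lra. apply Rmult_le_compat_l. nra. apply Rmult_le_compat_l. lra.
    apply Rmult_le_compat_l. fold r in Hz; lra. exact HJ. }
  assert (Hid : exp (- alpha * r ^ m) * (Cmod a * INR m * (exp u * (r * (K0 * ((1 - exp (- b)) / (b * INR m))))))
     = Cmod a * N * (r * r ^ (m - 1)) * (exp (- alpha * r ^ m) * exp u * exp (alpha * r ^ m - u)) * ((1 - exp (- b)) / b)).
  { unfold K0. fold r. field. lra. }
  rewrite Hid. clear Hid.
  rewrite <- !exp_plus. replace (- alpha * r ^ m + u + (alpha * r ^ m - u)) with 0 by ring. rewrite exp_0.
  replace (r * r ^ (m - 1)) with (r ^ m).
  2:{ destruct m as [|k]. lia. replace (S k - 1)%nat with k by lia. reflexivity. }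
  replace (Cmod a * N * r ^ m * 1 * ((1 - exp (- b)) / b)) with (Cmod a * N * ((1 - exp (- b)) / (alpha - Cmod lambda))).
  2:{ unfold b. fold r. field. split; lra. }
  pose proof (exp_pos (- b)).
  unfold Rdiv. rewrite (Rmult_comm (Cmod a) (/ (alpha - Cmod lambda))) at 1.
  assert (0 < / (alpha - Cmod lambda)) by (apply Rinv_0_lt_compat; lra).
  assert (0 <= Cmod a * N) by nra.
  replace (/ (alpha - Cmod lambda) * Cmod a * N) with (Cmod a * N * (1 * / (alpha - Cmod lambda))) by ring.
  apply Rmult_le_compat_l. lra. apply Rmult_le_compat_r; lra.
Qed.


Lemma part1 (m : nat) (alpha : R) (Hm : (1 <= m)%nat) (Halpha : 0 < alpha) :
  forall a lambda : C, Cmod lambda < alpha ->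
     fock_bounded_by alpha m (K_op a lambda m) (Cmod a / (alpha - Cmod lambda)).
Proof.
  intros a lambda Hl f Hf. pose proof Hf as [Hfe _].
  destruct (fock_norm_facts alpha m f Hf) as [HN HN0].
  split.
  - split. apply entire_K; auto.
    exists (Cmod a / (alpha - Cmod lambda) * fock_norm alpha m f). intros z Hz.
    apply K_weight; auto.
  - apply fock_norm_le. intros z Hz. apply K_weight; auto.
Qed.

Lemma Cderiv_pow (a_m : C) (m : nat) w :
  Cderiv (fun z => Cmult a_m (Cpow z m)) w = Cmult a_m (Cmult (RtoC (INR m)) (Cpow w (m - 1))).
Proof.
  assert (Hd : Cd (fun z => Cmult a_m (Cpow z m)) w (Cmult a_m (Cmult (RtoC (INR m)) (Cpow w (m - 1))))).
  { eapply Cd_l_ext; [|apply (Cd_mult (fun _ => a_m) (fun z => Cpow z m)); [apply Cd_const | apply Cd_pow]].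
    change (@eq C (Cplus (Cmult (RtoC 0) (Cpow w m)) (Cmult a_m (Cmult (RtoC (INR m)) (Cpow w (m - 1))))) (Cmult a_m (Cmult (RtoC (INR m)) (Cpow w (m - 1))))). ring. }
  unfold Cderiv.
  pose proof (epsilon_spec (inhabits (RtoC 0)) (fun l : C => @is_derive C_AbsRing C_NormedModule (fun z => Cmult a_m (Cpow z m)) w l) (ex_intro _ _ Hd)) as He.
  apply is_C_derive_unique in Hd. apply is_C_derive_unique in He. etransitivity; [symmetry; exact He|exact Hd].
Qed.

Lemma V_eq_K (a_m : C) (m : nat) f : entire f ->
  V_op (fun z => Cmult a_m (Cpow z m)) f = K_op a_m (RtoC 0) m f.
Proof.
  intros Hf. apply functional_extensionality. intros z.
  set (F := fun w => Cmult (Cpow w (m - 1)) (f w)).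
  assert (HF : Ccont F). { apply entire_Ccont. unfold F. apply entire_mult. apply entire_pow. exact Hf. }
  set (c := Cmult a_m (RtoC (INR m))).
  assert (E1 : V_op (fun z => Cmult a_m (Cpow z m)) f z = seg_int (fun w => Cmult c (F w)) z).
  { unfold V_op. f_equal. apply functional_extensionality. intros w. rewrite Cderiv_pow. unfold c, F. ring. }
  assert (E2 : K_op a_m (RtoC 0) m f z = Cmult c (seg_int F z)).
  { unfold K_op. fold c.
    replace (Cmult (RtoC 0) (Cpow z m)) with (RtoC 0) by ring. rewrite Cexp_0.
    replace (fun w => Cmult (Cexp (Copp (Cmult (RtoC 0) (Cpow w m)))) (Cmult (Cpow w (m - 1)) (f w))) with F.
    ring. apply functional_extensionality. intros w.
    replace (Copp (Cmult (RtoC 0) (Cpow w m))) with (RtoC 0) by ring. rewrite Cexp_0. unfold F. ring. }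
  rewrite E1, E2. rewrite !seg_int_eq; auto. unfold I. rewrite J_scal by auto. ring.
  apply Ccont_scal, HF.
Qed.

Theorem lemma2 (m : nat) (alpha : R) (Hm : (1 <= m)%nat) (Halpha : 0 < alpha) :
  (forall a lambda : C, Cmod lambda < alpha ->
     fock_bounded_by alpha m (K_op a lambda m) (Cmod a / (alpha - Cmod lambda)))
  /\
  (forall a_m : C,
     fock_bounded_by alpha m (V_op (fun z => Cmult a_m (Cpow z m))) (Cmod a_m / alpha)).
Proof.
  split.
  - apply part1; auto.
  - intros a_m f Hf. pose proof Hf as [Hfe _]. rewrite V_eq_K by auto.
    assert (H0 : Cmod (RtoC 0) < alpha) by (rewrite Cmod_0; lra).
    pose proof (part1 m alpha Hm Halpha a_m (RtoC 0) H0 f Hf) as H.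
    rewrite Cmod_0, Rminus_0_r in H. exact H.
Qed.
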